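(* From any (code for a) computable tree $T\subseteq 2^{<\omega}$ one may uniformly compute a (code for a) computable function $f_T:[0,1]\to[0,1]$ such that: (1) $f_T$ is continuous and increasing with $f_T(x)\ge x$ for all $x$; (2) $f_T(x)=x$ if and only if $x\in\{0,1\}$, or $x\in\mathcal{C}$ and $c^{-1}(x)\in[T]$.
   Context: $2^{<\omega}$ is the set of finite binary strings; a tree is a subset of $2^{<\omega}$ closed under initial segments, and it is computable if it is a computable set under a standard computable coding of strings by natural numbers. $[T]$ is the set of $X\in 2^\omega$ all of whose finite initial segments lie in $T$. $\mathcal{C}\subseteq[0,1]$ is the set of $x$ whose ternary expansion begins with digit $1$ and continues using only digits $0$ and $2$; for $X\in 2^\omega$, $c(X)$ is the unique $x\in\mathcal{C}$ whose first ternary digit is $1$ and whose $(n+1)$st ternary digit (after the point, counting the first as digit $0$... i.e. the digit following the $n$ digits after the leading $1$) is $2X(n)$. A code for a continuous $f:[0,1]\to[0,1]$ consists of Cauchy names (rational approximations within $2^{-n}$ for every $n$) of $f(q)$ for each rational $q\in[0,1]$ together with a modulus of uniform continuity $d:\mathbb{N}\to\mathbb{N}$ ($|x-y|<2^{-d(m)}\Rightarrow |f(x)-f(y)|<2^{-m}$); $f$ is computable if it has a computable code. ''Uniformly compute'' means there is a single algorithm which, given a code for $T$, produces a code for $f_T$. *)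

(* Defs.v *)
From Stdlib Require Import Reals Lra Lia List Arith ZArith.
Import ListNotations.
Open Scope R_scope.

Inductive prog : Type :=
| PZero : prog
| PSucc : prog
| PProj : nat -> prog
| POracle : prog
| PComp : prog -> list prog -> prog
| PRec : prog -> prog -> prog
| PMu : prog -> prog.

Inductive eval (alpha : nat -> nat) : prog -> list nat -> nat -> Prop :=
| ev_zero xs : eval alpha PZero xs 0
| ev_succ xs : eval alpha PSucc xs (S (nth 0 xs 0%nat))
| ev_proj i xs : eval alpha (PProj i) xs (nth i xs 0%nat)
| ev_oracle xs : eval alpha POracle xs (alpha (nth 0 xs 0%nat))
| ev_comp f gs xs ys z :
    Forall2 (fun g y => eval alpha g xs y) gs ys ->
    eval alpha f ys z -> eval alpha (PComp f gs) xs z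
| ev_rec0 f g xs y : eval alpha f xs y -> eval alpha (PRec f g) (0%nat :: xs) y
| ev_recS f g n xs z y :
    eval alpha (PRec f g) (n :: xs) z -> eval alpha g (n :: z :: xs) y ->
    eval alpha (PRec f g) (S n :: xs) y
| ev_mu f xs n :
    eval alpha f (n :: xs) 0%nat ->
    (forall m, (m < n)%nat -> exists k, eval alpha f (m :: xs) (S k)) ->
    eval alpha (PMu f) xs n.

(** A function nat -> nat is computable if some oracle-free program
    (the oracle is the constant 0 function) computes it. *)
Definition computable (g : nat -> nat) : Prop :=
  exists p : prog, forall n, eval (fun _ => 0%nat) p [n] (g n).

(** Standard coding of finite binary strings: the string b0 b1 ... b(k-1)
    is coded by the number whose binary expansion is 1 b0 b1 ... b(k-1).
    This is a bijection between 2^{<omega} and the positive naturals. *)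
Definition strcode (s : list bool) : nat :=
  fold_left (fun acc (b : bool) => (2 * acc + (if b then 1 else 0))%nat) s 1%nat.

Definition npair (a b : nat) : nat := ((a + b) * (a + b + 1) / 2 + b)%nat.

Definition is_tree (T : list bool -> Prop) : Prop :=
  forall s t : list bool, T (s ++ t) -> T s.

Definition tree_code (T : list bool -> Prop) (alpha : nat -> nat) : Prop :=
  alpha 0%nat = 0%nat /\
  forall s, (T s -> alpha (strcode s) = 1%nat) /\ (~ T s -> alpha (strcode s) = 0%nat).

Definition computable_tree (T : list bool -> Prop) : Prop :=
  is_tree T /\ exists alpha, tree_code T alpha /\ computable alpha.

Definition in_body (T : list bool -> Prop) (X : nat -> bool) : Prop :=
  forall n, T (map X (seq 0 n)).

Definition is_cmap (X : nat -> bool) (x : R) : Prop :=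
  Un_cv (fun N => sum_f_R0 (fun n => 2 * (if X n then 1 else 0) / 3 ^ (n + 2)) N)
        (x - 1 / 3).

Definition in_C (x : R) : Prop := exists X, is_cmap X x.

(** Codes for continuous functions [0,1] -> [0,1], as a single h : nat -> nat:
    - the rational q = a/(b+1) (for a <= b+1, so q in [0,1]) has Cauchy name
      n |-> zdec (h <0,<<a,b>,<n,0>>>) / (h <0,<<a,b>,<n,1>>> + 1),
    - the modulus of uniform continuity is m |-> h <1,m>. *)
Definition zdec (k : nat) : Z :=
  if Nat.even k then Z.of_nat (Nat.div2 k) else (- Z.of_nat (S (Nat.div2 k)))%Z.

Definition code_approx (h : nat -> nat) (a b n : nat) : R :=
  IZR (zdec (h (npair 0 (npair (npair a b) (npair n 0))))) /
  INR (S (h (npair 0 (npair (npair a b) (npair n 1))))).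

Definition code_modulus (h : nat -> nat) (m : nat) : nat := h (npair 1 m).

Definition in01 (x : R) : Prop := 0 <= x <= 1.

Definition is_code (h : nat -> nat) (f : R -> R) : Prop :=
  (forall a b n : nat, (a <= S b)%nat ->
     Rabs (code_approx h a b n - f (INR a / INR (S b))) <= (/ 2) ^ n) /\
  (forall (m : nat) (x y : R), in01 x -> in01 y ->
     Rabs (x - y) < (/ 2) ^ (code_modulus h m) -> Rabs (f x - f y) < (/ 2) ^ m).

(* Main.v *)
From Coquelicot Require Import Coquelicot.
Require Import Defs.
From Stdlib Require Import Reals List Lia Lra Arith ZArith Classical ClassicalEpsilon.
Import ListNotations.

Open Scope nat_scope.

Definition CP (F : (nat -> nat) -> list nat -> nat) : Prop :=
  exists p, forall al xs, eval al p xs (F al xs).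

Lemma cp_ext F G : CP F -> (forall al xs, F al xs = G al xs) -> CP G.
Proof. intros [p Hp] E; exists p; intros; rewrite <- E; auto. Qed.

Lemma cp_zero : CP (fun _ _ => 0%nat).
Proof. exists PZero; intros; constructor. Qed.
Lemma cp_succ : CP (fun _ xs => S (nth 0 xs 0%nat)).
Proof. exists PSucc; intros; constructor. Qed.
Lemma cp_proj i : CP (fun _ xs => nth i xs 0%nat).
Proof. exists (PProj i); intros; constructor. Qed.
Lemma cp_oracle : CP (fun al xs => al (nth 0 xs 0%nat)).
Proof. exists POracle; intros; constructor. Qed.

Lemma cp_comp F Gs : CP F -> Forall CP Gs ->
  CP (fun al xs => F al (map (fun G => G al xs) Gs)).
Proof.
  intros [pf Hf] HG.
  assert (exists ps, forall al xs, Forall2 (fun g y => eval al g xs y) ps (map (fun G => G al xs) Gs)) as [ps Hps].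
  { induction HG as [|G Gs [pg Hg] _ [ps IH]].
    - exists []; intros; constructor.
    - exists (pg :: ps); intros; simpl; constructor; auto. }
  exists (PComp pf ps); intros; econstructor; eauto.
Qed.

Fixpoint recf (F : list nat -> nat) (G : list nat -> nat) (n : nat) (ys : list nat) : nat :=
  match n with 0 => F ys | S i => G (i :: recf F G i ys :: ys) end.

Lemma cp_rec F G : CP F -> CP G ->
  CP (fun al xs => recf (F al) (G al) (nth 0 xs 0%nat)
                        [nth 1 xs 0%nat; nth 2 xs 0%nat; nth 3 xs 0%nat; nth 4 xs 0%nat]).
Proof.
  intros [pf Hf] [pg Hg].
  exists (PComp (PRec pf pg) [PProj 0; PProj 1; PProj 2; PProj 3; PProj 4]).
  intros al xs. econstructor.
  - repeat constructor.
  - simpl. generalize (nth 0 xs 0%nat). intro n. induction n.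
    + constructor. apply Hf.
    + econstructor. apply IHn. apply Hg.
Qed.

Definition CF1 (f : nat -> nat) := CP (fun _ xs => f (nth 0 xs 0%nat)).
Definition CF2 (f : nat -> nat -> nat) := CP (fun _ xs => f (nth 0 xs 0%nat) (nth 1 xs 0%nat)).
Definition CF3 (f : nat -> nat -> nat -> nat) :=
  CP (fun _ xs => f (nth 0 xs 0%nat) (nth 1 xs 0%nat) (nth 2 xs 0%nat)).

Lemma ap1 f G : CF1 f -> CP G -> CP (fun al xs => f (G al xs)).
Proof.
  intros Hf HG. eapply cp_ext.
  - apply (cp_comp _ [G] Hf). repeat constructor; auto.
  - reflexivity.
Qed.
Lemma ap2 f G1 G2 : CF2 f -> CP G1 -> CP G2 -> CP (fun al xs => f (G1 al xs) (G2 al xs)).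
Proof.
  intros Hf H1 H2. eapply cp_ext.
  - apply (cp_comp _ [G1; G2] Hf). repeat constructor; auto.
  - reflexivity.
Qed.
Lemma ap3 f G1 G2 G3 : CF3 f -> CP G1 -> CP G2 -> CP G3 ->
  CP (fun al xs => f (G1 al xs) (G2 al xs) (G3 al xs)).
Proof.
  intros Hf H1 H2 H3. eapply cp_ext.
  - apply (cp_comp _ [G1; G2; G3] Hf). repeat constructor; auto.
  - reflexivity.
Qed.
Lemma apO G : CP G -> CP (fun al xs => al (G al xs)).
Proof.
  intros H. eapply cp_ext.
  - apply (cp_comp _ [G] cp_oracle). repeat constructor; auto.
  - reflexivity.
Qed.

Lemma cp_const c : CP (fun _ _ => c).
Proof.
  induction c. apply cp_zero.
  eapply cp_ext. apply (ap1 S); [apply cp_succ| apply IHc]. reflexivity.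
Qed.


Fixpoint loopf (b : nat -> nat -> nat -> nat -> nat)
  (s : nat -> nat -> nat -> nat -> nat -> nat -> nat) (n p1 p2 p3 p4 : nat) : nat :=
  match n with
  | 0 => b p1 p2 p3 p4
  | S i => s i (loopf b s i p1 p2 p3 p4) p1 p2 p3 p4
  end.

Definition CF5 (f : (nat -> nat) -> nat -> nat -> nat -> nat -> nat -> nat) :=
  CP (fun al xs => f al (nth 0 xs 0%nat) (nth 1 xs 0%nat) (nth 2 xs 0%nat) (nth 3 xs 0%nat) (nth 4 xs 0%nat)).

Lemma cp_loop (b : (nat -> nat) -> nat -> nat -> nat -> nat -> nat) s :
  CP (fun al xs => b al (nth 0 xs 0%nat) (nth 1 xs 0%nat) (nth 2 xs 0%nat) (nth 3 xs 0%nat)) ->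
  CP (fun al xs => s al (nth 0 xs 0%nat) (nth 1 xs 0%nat) (nth 2 xs 0%nat) (nth 3 xs 0%nat)
                        (nth 4 xs 0%nat) (nth 5 xs 0%nat)) ->
  CF5 (fun al => loopf (b al) (s al)).
Proof.
  intros Hb Hs. eapply cp_ext. apply (cp_rec _ _ Hb Hs).
  intros al xs. simpl. generalize (nth 0 xs 0%nat); intro n; induction n; simpl; auto.
  rewrite IHn; auto.
Qed.

Lemma ap5 f G1 G2 G3 G4 G5 : CF5 f -> CP G1 -> CP G2 -> CP G3 -> CP G4 -> CP G5 ->
  CP (fun al xs => f al (G1 al xs) (G2 al xs) (G3 al xs) (G4 al xs) (G5 al xs)).
Proof.
  intros Hf H1 H2 H3 H4 H5. eapply cp_ext.
  - apply (cp_comp _ [G1; G2; G3; G4; G5] Hf). repeat constructor; auto.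
  - reflexivity.
Qed.

Lemma cf_S : CF1 S. Proof. exact cp_succ. Qed.

Create HintDb cfdb.
#[export] Hint Resolve cf_S : cfdb.

Ltac cpt :=
  match goal with
  | |- CP (fun _ xs => nth ?i xs 0%nat) => apply cp_proj
  | |- CP (fun _ _ => ?c) => apply cp_const
  | |- CP (fun al xs => al (@?G al xs)) => apply (apO G); cpt
  | |- CP (fun al xs => ?f al (@?G1 al xs) (@?G2 al xs) (@?G3 al xs) (@?G4 al xs) (@?G5 al xs)) =>
      apply (ap5 f G1 G2 G3 G4 G5); [solve [auto with cfdb] | cpt | cpt | cpt | cpt | cpt]
  | |- CP (fun al xs => ?f (@?G1 al xs) (@?G2 al xs) (@?G3 al xs)) =>
      apply (ap3 f G1 G2 G3); [solve [auto with cfdb] | cpt | cpt | cpt]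
  | |- CP (fun al xs => ?f (@?G1 al xs) (@?G2 al xs)) =>
      apply (ap2 f G1 G2); [solve [auto with cfdb] | cpt | cpt]
  | |- CP (fun al xs => ?f (@?G1 al xs)) =>
      apply (ap1 f G1); [solve [auto with cfdb] | cpt]
  end.

Ltac mkloop := unfold CF5; apply cp_loop; cpt.

Definition addL (al : nat -> nat) := loopf (fun p1 _ _ _ => p1) (fun _ acc _ _ _ _ => S acc).
Lemma cf_addL : CF5 addL. Proof. unfold addL. mkloop. Qed.
Lemma addL_eq al n m : addL al n m 0 0 0 = n + m.
Proof. induction n; simpl; auto. unfold addL in *; simpl in *. rewrite IHn; auto. Qed.
Lemma cf_add : CF2 Nat.add.
Proof.
  eapply cp_ext with (F := fun al xs => addL al (nth 0 xs 0) (nth 1 xs 0) 0 0 0).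
  - assert (H := cf_addL). cpt.
  - intros; apply addL_eq.
Qed.
#[export] Hint Resolve cf_add cf_addL : cfdb.

Definition mulL (al : nat -> nat) := loopf (fun _ _ _ _ => 0) (fun _ acc p1 _ _ _ => acc + p1).
Lemma cf_mulL : CF5 mulL. Proof. unfold mulL. mkloop. Qed.
Lemma cf_mul : CF2 Nat.mul.
Proof.
  eapply cp_ext with (F := fun al xs => mulL al (nth 0 xs 0) (nth 1 xs 0) 0 0 0).
  - assert (H := cf_mulL). cpt.
  - intros al xs. generalize (nth 0 xs 0) (nth 1 xs 0). intros n m. induction n; simpl; auto.
    unfold mulL in *; simpl in *. rewrite IHn; lia.
Qed.
#[export] Hint Resolve cf_mul : cfdb.

Definition predL (al : nat -> nat) := loopf (fun _ _ _ _ => 0) (fun i _ _ _ _ _ => i).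
Lemma cf_predL : CF5 predL. Proof. unfold predL. mkloop. Qed.
Lemma cf_pred : CF1 Nat.pred.
Proof.
  eapply cp_ext with (F := fun al xs => predL al (nth 0 xs 0) 0 0 0 0).
  - assert (H := cf_predL). cpt.
  - intros al xs. destruct (nth 0 xs 0); reflexivity.
Qed.
#[export] Hint Resolve cf_pred : cfdb.

Definition subL (al : nat -> nat) := loopf (fun p1 _ _ _ => p1) (fun _ acc _ _ _ _ => Nat.pred acc).
Lemma cf_subL : CF5 subL. Proof. unfold subL. mkloop. Qed.
Lemma cf_sub : CF2 Nat.sub.
Proof.
  eapply cp_ext with (F := fun al xs => subL al (nth 1 xs 0) (nth 0 xs 0) 0 0 0).
  - assert (H := cf_subL). cpt.
  - intros al xs. generalize (nth 0 xs 0) (nth 1 xs 0). intros m n. induction n.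
    + unfold subL; simpl; lia.
    + unfold subL in *; simpl in *. rewrite IHn; lia.
Qed.
#[export] Hint Resolve cf_sub : cfdb.

Definition powL (al : nat -> nat) := loopf (fun _ _ _ _ => 1) (fun _ acc p1 _ _ _ => acc * p1).
Lemma cf_powL : CF5 powL. Proof. unfold powL. mkloop. Qed.
Lemma cf_pow : CF2 Nat.pow.
Proof.
  eapply cp_ext with (F := fun al xs => powL al (nth 1 xs 0) (nth 0 xs 0) 0 0 0).
  - assert (H := cf_powL). cpt.
  - intros al xs. generalize (nth 0 xs 0) (nth 1 xs 0). intros m n. induction n; simpl; auto.
    unfold powL in *; simpl in *. rewrite IHn; lia.
Qed.
#[export] Hint Resolve cf_pow : cfdb.

Lemma cf_min : CF2 Nat.min.
Proof.
  eapply cp_ext with (F := fun al xs => nth 0 xs 0 - (nth 0 xs 0 - nth 1 xs 0)).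
  - cpt.
  - intros; lia.
Qed.
#[export] Hint Resolve cf_min : cfdb.

Definition ifz (c u v : nat) : nat := match c with 0 => u | S _ => v end.
Definition ifzL (al : nat -> nat) := loopf (fun p1 _ _ _ => p1) (fun _ _ _ p2 _ _ => p2).
Lemma cf_ifzL : CF5 ifzL. Proof. unfold ifzL. mkloop. Qed.
Lemma cf_ifz : CF3 ifz.
Proof.
  eapply cp_ext with (F := fun al xs => ifzL al (nth 0 xs 0) (nth 1 xs 0) (nth 2 xs 0) 0 0).
  - assert (H := cf_ifzL). cpt.
  - intros al xs. destruct (nth 0 xs 0); reflexivity.
Qed.
#[export] Hint Resolve cf_ifz : cfdb.

Definition oddn (n : nat) : nat := if Nat.odd n then 1 else 0.
Definition oddL (al : nat -> nat) := loopf (fun _ _ _ _ => 0) (fun _ acc _ _ _ _ => 1 - acc).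
Lemma cf_oddL : CF5 oddL. Proof. unfold oddL. mkloop. Qed.
Lemma cf_odd : CF1 oddn.
Proof.
  eapply cp_ext with (F := fun al xs => oddL al (nth 0 xs 0) 0 0 0 0).
  - assert (H := cf_oddL). cpt.
  - intros al xs. generalize (nth 0 xs 0). intros n. induction n; simpl; auto.
    unfold oddL in *; simpl in *. rewrite IHn. unfold oddn. rewrite Nat.odd_succ, <- Nat.negb_odd.
    destruct (Nat.odd n); reflexivity.
Qed.
#[export] Hint Resolve cf_odd : cfdb.

Definition halfL (al : nat -> nat) := loopf (fun _ _ _ _ => 0) (fun i acc _ _ _ _ => acc + oddn i).
Lemma cf_halfL : CF5 halfL. Proof. unfold halfL. mkloop. Qed.
Lemma cf_half : CF1 Nat.div2.
Proof.
  eapply cp_ext with (F := fun al xs => halfL al (nth 0 xs 0) 0 0 0 0).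
  - assert (H := cf_halfL). cpt.
  - intros al xs. generalize (nth 0 xs 0). intros n. induction n; [reflexivity|].
    unfold halfL in *; cbn -[Nat.div2] in *. rewrite IHn. unfold oddn.
    destruct (Nat.odd n) eqn:E.
    + rewrite <- Nat.Odd_div2. lia. apply Nat.odd_spec; auto.
    + rewrite <- Nat.Even_div2. lia. apply Nat.even_spec. rewrite <- Nat.negb_odd, E; auto.
Qed.
#[export] Hint Resolve cf_half : cfdb.

Open Scope nat_scope.

Definition shiftL (al : nat -> nat) := loopf (fun p1 _ _ _ => p1) (fun _ acc _ _ _ _ => Nat.div2 acc).
Lemma cf_shiftL : CF5 shiftL. Proof. unfold shiftL. mkloop. Qed.
#[export] Hint Resolve cf_shiftL : cfdb.
Definition shiftn (al : nat -> nat) (i j : nat) := shiftL al i j 0 0 0.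

(* tern j k = sum_{i<k} bit_i(j) 3^i *)
Definition ternL (al : nat -> nat) :=
  loopf (fun _ _ _ _ => 0) (fun i acc p1 _ _ _ => acc + oddn (shiftL al i p1 0 0 0) * 3 ^ i).
Lemma cf_ternL : CF5 ternL. Proof. unfold ternL. mkloop. Qed.
#[export] Hint Resolve cf_ternL : cfdb.

Definition lj (al : nat -> nat) (j k : nat) := 3 ^ k + 2 * ternL al k j 0 0 0.
Definition distj (al : nat -> nat) (j k a b : nat) :=
  (lj al j k * (b + 1) - a * 3 ^ (k + 1)) + (a * 3 ^ (k + 1) - (lj al j k + 1) * (b + 1)).

Definition mloopL (al : nat -> nat) :=
  loopf (fun k a b _ => a * 3 ^ (k + 1))
        (fun j acc k a b _ => ifz (al (2 ^ k + j)) acc (Nat.min acc (distj al j k a b))).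
Lemma cf_mloopL : CF5 mloopL.
Proof. unfold mloopL. apply cp_loop; unfold distj, lj; cpt. Qed.
#[export] Hint Resolve cf_mloopL : cfdb.

Definition dd (al : nat -> nat) (k a b : nat) :=
  Nat.min (mloopL al (2 ^ k) k a b 0) ((b + 1 - a) * 3 ^ (k + 1)).

Definition PL (al : nat -> nat) :=
  loopf (fun a b _ _ => 12 * a + dd al 0 a b)
        (fun i acc a b _ _ => 12 * acc + dd al (S i) a b).
Lemma cf_PL : CF5 PL.
Proof. unfold PL. apply cp_loop; unfold dd; cpt. Qed.
#[export] Hint Resolve cf_PL : cfdb.

Definition triL (al : nat -> nat) := loopf (fun _ _ _ _ => 0) (fun i acc _ _ _ _ => acc + i + 1).
Lemma cf_triL : CF5 triL. Proof. unfold triL. mkloop. Qed.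
#[export] Hint Resolve cf_triL : cfdb.
Definition diagL (al : nat -> nat) :=
  loopf (fun _ _ _ _ => 0) (fun v acc p1 _ _ _ => acc + (1 - (triL al (v + 1) 0 0 0 0 - p1))).
Lemma cf_diagL : CF5 diagL. Proof. unfold diagL. mkloop. Qed.
#[export] Hint Resolve cf_diagL : cfdb.

Definition usnd (al : nat -> nat) (N : nat) := N - triL al (diagL al (N + 1) N 0 0 0) 0 0 0 0.
Definition ufst (al : nat -> nat) (N : nat) := diagL al (N + 1) N 0 0 0 - usnd al N.

Definition Hfun (al : nat -> nat) (N : nat) : nat :=
  ifz (ufst al N)
      (ifz (usnd al (usnd al (usnd al N)))
           (2 * PL al (ufst al (usnd al (usnd al N)))
                      (ufst al (ufst al (usnd al N))) (usnd al (ufst al (usnd al N))) 0 0)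
           (ifz (usnd al (usnd al (usnd al N)) - 1)
                ((usnd al (ufst al (usnd al N)) + 1) * 12 ^ (ufst al (usnd al (usnd al N)) + 1) - 1)
                0))
      (usnd al N + 1).

Lemma Hfun_cp : exists Phi, forall al n, eval al Phi [n] (Hfun al n).
Proof.
  assert (CP (fun al xs => Hfun al (nth 0 xs 0))) as [p Hp].
  { unfold Hfun, ufst, usnd. cpt. }
  exists p. intros al n. apply (Hp al [n]).
Qed.

Open Scope nat_scope.

Lemma tri_S al s : triL al (S s) 0 0 0 0 = triL al s 0 0 0 0 + s + 1.
Proof. reflexivity. Qed.
Lemma tri_double al s : 2 * triL al s 0 0 0 0 = s * (s + 1).
Proof. induction s. reflexivity. rewrite tri_S. nia. Qed.
Lemma tri_mono al m n : m <= n -> triL al m 0 0 0 0 <= triL al n 0 0 0 0.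
Proof. induction 1. lia. rewrite tri_S. lia. Qed.
Lemma tri_ge al s : s <= triL al s 0 0 0 0.
Proof. induction s. simpl; lia. rewrite tri_S. lia. Qed.

Lemma npair_tri al a b : npair a b = triL al (a + b) 0 0 0 0 + b.
Proof.
  unfold npair. rewrite <- (tri_double al (a+b)).
  rewrite Nat.mul_comm, Nat.div_mul by lia. reflexivity.
Qed.

Lemma diag_count al s y M : y <= s ->
  diagL al M (triL al s 0 0 0 0 + y) 0 0 0 = Nat.min M s.
Proof.
  intro Hy. induction M. reflexivity.
  change (diagL al (S M) (triL al s 0 0 0 0 + y) 0 0 0) with
    (diagL al M (triL al s 0 0 0 0 + y) 0 0 0 +
     (1 - (triL al (M + 1) 0 0 0 0 - (triL al s 0 0 0 0 + y)))).
  rewrite IHM.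
  destruct (le_lt_dec (M + 1) s).
  - assert (H := tri_mono al _ _ l). lia.
  - assert (H := tri_mono al (s+1) (M+1) ltac:(lia)).
    rewrite Nat.add_1_r in H at 1. rewrite tri_S in H. lia.
Qed.

Lemma unpair_ok al a b : usnd al (npair a b) = b /\ ufst al (npair a b) = a.
Proof.
  unfold ufst, usnd. rewrite (npair_tri al).
  rewrite diag_count by lia.
  assert (H := tri_ge al (a+b)).
  replace (Nat.min (triL al (a + b) 0 0 0 0 + b + 1) (a + b)) with (a + b) by lia.
  split; lia.
Qed.

Lemma Hfun_approx al a b n :
  Hfun al (npair 0 (npair (npair a b) (npair n 0))) = 2 * PL al n a b 0 0 /\
  Hfun al (npair 0 (npair (npair a b) (npair n 1))) = (b + 1) * 12 ^ (n + 1) - 1.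
Proof.
  unfold Hfun.
  split;
  repeat (match goal with |- context [usnd al (npair ?x ?y)] => rewrite (proj1 (unpair_ok al x y))
                        | |- context [ufst al (npair ?x ?y)] => rewrite (proj2 (unpair_ok al x y)) end);
  reflexivity.
Qed.

Lemma Hfun_mod al m : Hfun al (npair 1 m) = m + 1.
Proof.
  unfold Hfun.
  repeat (match goal with |- context [usnd al (npair ?x ?y)] => rewrite (proj1 (unpair_ok al x y))
                        | |- context [ufst al (npair ?x ?y)] => rewrite (proj2 (unpair_ok al x y)) end);
  reflexivity.
Qed.

Lemma shift_S al i j : shiftL al (S i) j 0 0 0 = shiftL al i (Nat.div2 j) 0 0 0.
Proof.
  revert j. induction i; intro j. reflexivity.
  change (shiftL al (S (S i)) j 0 0 0) with (Nat.div2 (shiftL al (S i) j 0 0 0)).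
  rewrite IHi. reflexivity.
Qed.

Lemma tern_S al k j :
  ternL al (S k) j 0 0 0 = 3 * ternL al k (Nat.div2 j) 0 0 0 + oddn j.
Proof.
  revert j. induction k; intro j.
  - change (ternL al 1 j 0 0 0) with (0 + oddn j * 3 ^ 0).
    change (ternL al 0 (Nat.div2 j) 0 0 0) with 0. rewrite Nat.pow_0_r; lia.
  - change (ternL al (S (S k)) j 0 0 0) with
      (ternL al (S k) j 0 0 0 + oddn (shiftL al (S k) j 0 0 0) * 3 ^ (S k)).
    rewrite IHk.
    change (ternL al (S k) (Nat.div2 j) 0 0 0) with
      (ternL al k (Nat.div2 j) 0 0 0 + oddn (shiftL al k (Nat.div2 j) 0 0 0) * 3 ^ k).
    rewrite shift_S. simpl. lia.
Qed.

Open Scope R_scope.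

Definition distI (x L R : R) := Rmax 0 (L - x) + Rmax 0 (x - R).
Definition Lr (al : nat -> nat) (j k : nat) := INR (lj al j k) / 3 ^ (k + 1).
Definition Rr (al : nat -> nat) (j k : nat) := (INR (lj al j k) + 1) / 3 ^ (k + 1).

Fixpoint rm (al : nat -> nat) (k : nat) (x : R) (J : nat) : R :=
  match J with
  | O => Rabs x
  | S j => match al (2 ^ k + j)%nat with
           | O => rm al k x j
           | S _ => Rmin (rm al k x j) (distI x (Lr al j k) (Rr al j k))
           end
  end.

Definition dk (al : nat -> nat) (k : nat) (x : R) : R :=
  Rmin (rm al k x (2 ^ k)) (Rabs (1 - x)).

Lemma p3_pos k : 0 < 3 ^ k.
Proof. apply pow_lt; lra. Qed.

Lemma LR_le al j k : Lr al j k <= Rr al j k.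
Proof.
  unfold Lr, Rr. apply Rmult_le_compat_r. left; apply Rinv_0_lt_compat, p3_pos. lra.
Qed.

Lemma distI_nonneg x L R : 0 <= distI x L R.
Proof. unfold distI. generalize (Rmax_l 0 (L - x)) (Rmax_l 0 (x - R)). lra. Qed.

Lemma distI_zero x L R : L <= R -> (distI x L R = 0 <-> L <= x <= R).
Proof.
  intros. unfold distI, Rmax. split; intros;
  repeat destruct Rle_dec; lra.
Qed.

Lemma distI_lip x y L R : L <= R -> Rabs (distI x L R - distI y L R) <= Rabs (x - y).
Proof.
  intros. unfold distI, Rmax, Rabs.
  repeat destruct Rle_dec; repeat destruct Rcase_abs; lra.
Qed.

Lemma Rmin_lip a b c d e : Rabs (a - c) <= e -> Rabs (b - d) <= e -> Rabs (Rmin a b - Rmin c d) <= e.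
Proof.
  unfold Rmin, Rabs. intros.
  repeat destruct Rle_dec; repeat destruct Rcase_abs; lra.
Qed.

Lemma rm_nonneg al k x J : 0 <= rm al k x J.
Proof.
  induction J; simpl. apply Rabs_pos.
  destruct (al _). auto. unfold Rmin; destruct Rle_dec; auto. apply distI_nonneg.
Qed.

Lemma rm_le al k x J : rm al k x J <= Rabs x.
Proof.
  induction J; simpl. lra.
  destruct (al _). auto. generalize (Rmin_l (rm al k x J) (distI x (Lr al J k) (Rr al J k))). lra.
Qed.

Lemma rm_lip al k x y J : Rabs (rm al k x J - rm al k y J) <= Rabs (x - y).
Proof.
  induction J; simpl.
  - apply Rabs_triang_inv2.
  - destruct (al _). auto. apply Rmin_lip; auto. apply distI_lip, LR_le.
Qed.

Lemma dk_nonneg al k x : 0 <= dk al k x.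
Proof.
  unfold dk, Rmin. destruct Rle_dec. apply rm_nonneg. apply Rabs_pos.
Qed.

Lemma dk_le al k x : dk al k x <= Rabs (1 - x) /\ dk al k x <= Rabs x.
Proof.
  unfold dk. split. apply Rmin_r.
  generalize (Rmin_l (rm al k x (2 ^ k)) (Rabs (1 - x))) (rm_le al k x (2^k)). lra.
Qed.

Lemma dk_lip al k x y : Rabs (dk al k x - dk al k y) <= Rabs (x - y).
Proof.
  unfold dk. apply Rmin_lip. apply rm_lip.
  replace (x - y) with (-( (1 - x) - (1 - y))) by ring. rewrite Rabs_Ropp. apply Rabs_triang_inv2.
Qed.

Lemma Rmin_zero a b : 0 <= a -> 0 <= b -> (Rmin a b = 0 <-> a = 0 \/ b = 0).
Proof. unfold Rmin; intros; destruct Rle_dec; split; intros; lra. Qed.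

Lemma rm_zero al k x J :
  rm al k x J = 0 <-> x = 0 \/
    exists j, (j < J)%nat /\ al (2 ^ k + j)%nat <> 0%nat /\ Lr al j k <= x <= Rr al j k.
Proof.
  induction J; simpl.
  - split. intro H. left. destruct (Rcase_abs x); unfold Rabs in H; destruct Rcase_abs; lra.
    intros [->|[j [Hj _]]]. apply Rabs_R0. lia.
  - destruct (al (2 ^ k + J)%nat) eqn:E.
    + rewrite IHJ. split; intros [H|[j [H1 H2]]]; auto; right; exists j; split; auto; try lia.
      assert (j <> J) by (intro; subst; tauto). lia.
    + rewrite Rmin_zero by (apply rm_nonneg || apply distI_nonneg).
      rewrite IHJ, distI_zero by apply LR_le. split.
      * intros [[H|[j [H1 H2]]]|H]; auto; right. exists j; split; auto; lia.
        exists J; split; auto. split; auto. lia.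
      * intros [H|[j [H1 H2]]]; auto. destruct (Nat.eq_dec j J). subst; tauto.
        left; right; exists j; split; auto; lia.
Qed.

Lemma dk_zero al k x :
  dk al k x = 0 <-> x = 0 \/ x = 1 \/
    exists j, (j < 2 ^ k)%nat /\ al (2 ^ k + j)%nat <> 0%nat /\ Lr al j k <= x <= Rr al j k.
Proof.
  unfold dk. rewrite Rmin_zero by (apply rm_nonneg || apply Rabs_pos).
  rewrite rm_zero. split.
  - intros [[H|H]|H]; auto. right; left.
    unfold Rabs in H; destruct Rcase_abs; lra.
  - intros [H|[H|H]]; auto. right. rewrite H. replace (1-1) with 0 by ring. apply Rabs_R0.
Qed.

Import ListNotations.
Open Scope R_scope.

Definition w (k : nat) : R := (/ 4) ^ (k + 1).
Lemma w_pos k : 0 < w k.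
Proof. unfold w. apply pow_lt. lra. Qed.

Lemma is_series_w : is_series w (1 / 3).
Proof.
  assert (H := is_series_geom (/4) ltac:(rewrite Rabs_right; lra)).
  apply is_series_scal_r with (c := /4) in H.
  replace (1/3) with (/ (1 - /4) * /4) by field.
  eapply is_series_ext; [|exact H]. intro n. unfold w. rewrite pow_add. simpl. ring.
Qed.
Lemma ex_series_w : ex_series w.
Proof. eexists; apply is_series_w. Qed.
Lemma Series_w : Series w = 1/3.
Proof. apply is_series_unique, is_series_w. Qed.

Lemma Series_zero : Series (fun _ => 0) = 0.
Proof.
  rewrite (Series_ext _ (fun n => 0 * 1)) by (intro; ring).
  rewrite Series_scal_l. ring.
Qed.

Lemma Series_nonneg a : (forall n, 0 <= a n) -> ex_series a -> 0 <= Series a.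
Proof.
  intros H E. rewrite <- Series_zero. apply Series_le; auto. intro n; split; [lra|apply H].
Qed.

Lemma ex_series_bound a C : 0 <= C -> (forall n, Rabs (a n) <= w n * C) -> ex_series a.
Proof.
  intros. apply (ex_series_le a (fun n => w n * C)); auto.
  apply ex_series_scal_r, ex_series_w.
Qed.

Definition term (al : nat -> nat) (x : R) (k : nat) := w k * dk al k x.
Definition g (al : nat -> nat) (x : R) := Series (term al x).
Definition fT (al : nat -> nat) (x : R) := x + g al x.

Lemma term_bound al x k : Rabs (term al x k) <= w k * Rabs (1 - x).
Proof.
  unfold term. rewrite Rabs_mult, Rabs_right by (left; apply w_pos).
  rewrite (Rabs_right (dk al k x)) by (apply Rle_ge, dk_nonneg).
  apply Rmult_le_compat_l. left; apply w_pos. apply dk_le.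
Qed.

Lemma ex_term al x : ex_series (term al x).
Proof. apply (ex_series_bound _ (Rabs (1 - x))). apply Rabs_pos. apply term_bound. Qed.

Lemma term_nonneg al x k : 0 <= term al x k.
Proof. unfold term. apply Rmult_le_pos. left; apply w_pos. apply dk_nonneg. Qed.

Lemma g_nonneg al x : 0 <= g al x.
Proof. apply Series_nonneg. apply term_nonneg. apply ex_term. Qed.

Lemma g_le al x : g al x <= Rabs (1 - x) / 3.
Proof.
  unfold g. replace (Rabs (1 - x) / 3) with (Series w * Rabs (1 - x)) by (rewrite Series_w; field).
  rewrite <- Series_scal_r. apply Series_le.
  intro n. split. apply term_nonneg. generalize (term_bound al x n). unfold Rabs at 1.
  destruct Rcase_abs; lra.
  apply ex_series_scal_r, ex_series_w.
Qed.

Lemma g_lip al x y : Rabs (g al x - g al y) <= Rabs (x - y) / 3.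
Proof.
  unfold g. rewrite <- Series_minus by apply ex_term.
  assert (Hb : forall n, Rabs (term al x n - term al y n) <= w n * Rabs (x - y)).
  { intro n. unfold term. rewrite <- Rmult_minus_distr_l, Rabs_mult, Rabs_right by (left; apply w_pos).
    apply Rmult_le_compat_l. left; apply w_pos. apply dk_lip. }
  eapply Rle_trans. apply Series_Rabs.
  apply (ex_series_bound _ (Rabs (x - y))). apply Rabs_pos. intro n. rewrite Rabs_Rabsolu. auto.
  replace (Rabs (x - y) / 3) with (Series w * Rabs (x - y)) by (rewrite Series_w; field).
  rewrite <- Series_scal_r. apply Series_le. intro n; split; auto. apply Rabs_pos.
  apply ex_series_scal_r, ex_series_w.
Qed.

Lemma term_le_series a k : (forall n, 0 <= a n) -> ex_series a -> a k <= Series a.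
Proof.
  intros H E. rewrite (Series_incr_n a (S k)) by (lia || auto). simpl pred.
  assert (0 <= Series (fun n => a (S k + n)%nat)).
  { apply Series_nonneg. auto. apply ex_series_incr_n. auto. }
  destruct k. cbn [sum_f_R0]. lra.
  cbn [sum_f_R0]. assert (0 <= sum_f_R0 a k) by (apply cond_pos_sum; auto). lra.
Qed.

Lemma g_zero al x : g al x = 0 <-> forall k, dk al k x = 0.
Proof.
  split.
  - intros H k. assert (H1 := term_le_series (term al x) k (term_nonneg al x) (ex_term al x)).
    fold (g al x) in H1. rewrite H in H1. assert (H2 := term_nonneg al x k).
    unfold term in *. assert (H3 := w_pos k). assert (H4 := dk_nonneg al k x). nra.
  - intros H. unfold g. rewrite <- Series_zero. apply Series_ext. intro n. unfold term. rewrite H. ring.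
Qed.

Lemma f_lip al x y : Rabs (fT al x - fT al y) <= 4/3 * Rabs (x - y).
Proof.
  unfold fT. assert (H := g_lip al x y).
  replace (x + g al x - (y + g al y)) with ((x - y) + (g al x - g al y)) by ring.
  eapply Rle_trans. apply Rabs_triang. lra.
Qed.

Lemma f_incr al x y : x < y -> fT al x < fT al y.
Proof.
  intros. unfold fT. assert (H1 := g_lip al y x).
  unfold Rabs in H1. repeat destruct Rcase_abs; lra.
Qed.

Lemma f_ge al x : x <= fT al x.
Proof. unfold fT. generalize (g_nonneg al x). lra. Qed.

Lemma f_in01 al x : in01 x -> in01 (fT al x).
Proof.
  unfold in01. intros [H0 H1]. assert (H := g_le al x). assert (H2 := g_nonneg al x).
  rewrite Rabs_right in H by lra. unfold fT. lra.
Qed.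

Lemma f_tail al x n : in01 x ->
  Rabs (x + sum_f_R0 (term al x) n - fT al x) <= (/ 2) ^ n.
Proof.
  intros [H0 H1]. unfold fT, g.
  rewrite (Series_incr_n (term al x) (S n)) by (lia || apply ex_term). simpl pred.
  replace (x + sum_f_R0 (term al x) n - (x + (sum_f_R0 (term al x) n + Series (fun k => term al x (S n + k)))))
    with (- Series (fun k => term al x (S n + k))) by ring.
  rewrite Rabs_Ropp.
  assert (Hs : 0 <= Series (fun k => term al x (S n + k))).
  { apply Series_nonneg. intro; apply term_nonneg. apply ex_series_incr_n, ex_term. }
  rewrite Rabs_right by lra.
  apply Rle_trans with (Series (fun k => w k * (/4) ^ (S n))).
  - apply Series_le. intro k. split. apply term_nonneg.
    generalize (term_bound al x (S n + k)). rewrite Rabs_right by (apply Rle_ge, term_nonneg).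
    intro H. eapply Rle_trans. apply H.
    rewrite Rabs_right by lra. unfold w. rewrite <- pow_add.
    replace (S n + k + 1)%nat with (k + 1 + S n)%nat by lia.
    assert (0 < (/4) ^ (k + 1 + S n)) by (apply pow_lt; lra). nra.
    apply ex_series_scal_r, ex_series_w.
  - rewrite Series_scal_r, Series_w.
    assert ((/4) ^ S n <= (/ 2) ^ n).
    { simpl. apply Rle_trans with ((/4) ^ n). assert (0 < (/4)^n) by (apply pow_lt; lra). nra.
      apply pow_incr. lra. }
    assert (0 < (/4) ^ S n) by (apply pow_lt; lra). lra.
Qed.

Import ListNotations.
Open Scope R_scope.

Lemma INR_sub_max p q : INR (p - q) = Rmax 0 (INR p - INR q).
Proof.
  destruct (le_lt_dec q p).
  - rewrite minus_INR by auto. rewrite Rmax_right; auto. apply le_INR in l. lra.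
  - replace (p - q)%nat with 0%nat by lia. apply lt_INR in l. rewrite Rmax_left; simpl; lra.
Qed.

Lemma INR_min p q : INR (Nat.min p q) = Rmin (INR p) (INR q).
Proof.
  destruct (le_lt_dec p q).
  - rewrite Nat.min_l by auto. rewrite Rmin_left; auto. apply le_INR; auto.
  - rewrite Nat.min_r by lia. rewrite Rmin_right; auto. apply lt_INR in l. lra.
Qed.

Lemma rmax0_scale u c : 0 < c -> Rmax 0 u * c = Rmax 0 (u * c).
Proof. intros. unfold Rmax. repeat destruct Rle_dec; nra. Qed.
Lemma rmin_scale u v c : 0 < c -> Rmin u v * c = Rmin (u * c) (v * c).
Proof. intros. unfold Rmin. repeat destruct Rle_dec; nra. Qed.

Lemma INR3 : INR 3 = 3. Proof. simpl. ring. Qed.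
Lemma INR12 : INR 12 = 12. Proof. simpl. ring. Qed.

Section Corr.
Variable al : nat -> nat.
Variables a b : nat.
Hypothesis Hab : (a <= S b)%nat.
Let x := INR a / INR (S b).

Lemma Sb_pos : 0 < INR (S b).
Proof. apply lt_0_INR; lia. Qed.

Lemma x_in01 : in01 x.
Proof.
  unfold in01, x. assert (H := Sb_pos). split.
  apply Rmult_le_pos. apply pos_INR. left; apply Rinv_0_lt_compat; auto.
  apply le_INR in Hab. apply Rmult_le_reg_r with (INR (S b)); auto.
  unfold Rdiv. rewrite Rmult_assoc, Rinv_l by lra. lra.
Qed.

Lemma distj_eq j k : INR (distj al j k a b) = distI x (Lr al j k) (Rr al j k) * (INR (S b) * 3 ^ (k + 1)).
Proof.
  assert (H := Sb_pos). assert (H3 := p3_pos (k+1)).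
  unfold distj, distI, Lr, Rr, x.
  rewrite Rmult_plus_distr_r, !rmax0_scale by nra.
  rewrite plus_INR, !INR_sub_max, !mult_INR, pow_INR, INR3, !plus_INR.
  replace (INR (S b)) with (INR b + 1) in * by (rewrite S_INR; auto).
  change (INR 1) with 1.
  f_equal; f_equal; field; lra.
Qed.

Lemma mloop_eq k J : INR (mloopL al J k a b 0) = rm al k x J * (INR (S b) * 3 ^ (k + 1)).
Proof.
  assert (H := Sb_pos). assert (H3 := p3_pos (k+1)).
  induction J.
  - change (mloopL al 0 k a b 0) with (a * 3 ^ (k + 1))%nat. simpl rm.
    rewrite mult_INR, pow_INR, INR3. rewrite Rabs_right by (apply Rle_ge, x_in01).
    unfold x. field. lra.
  - change (mloopL al (S J) k a b 0) with
      (ifz (al (2 ^ k + J)%nat) (mloopL al J k a b 0) (Nat.min (mloopL al J k a b 0) (distj al J k a b))).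
    simpl rm. destruct (al (2 ^ k + J)%nat); simpl ifz. auto.
    rewrite INR_min, IHJ, distj_eq, rmin_scale by nra. reflexivity.
Qed.

Lemma dd_eq k : INR (dd al k a b) = dk al k x * (INR (S b) * 3 ^ (k + 1)).
Proof.
  assert (H := Sb_pos). assert (H3 := p3_pos (k+1)).
  unfold dd, dk. rewrite INR_min, mloop_eq, rmin_scale by nra. f_equal.
  rewrite mult_INR, pow_INR, INR3, minus_INR by lia.
  rewrite Rabs_right. unfold x. replace (INR (b+1)) with (INR (S b)) by (f_equal; lia). field. lra.
  destruct x_in01. fold x. lra.
Qed.

Lemma PL_eq n : INR (PL al n a b 0 0) / (INR (S b) * 12 ^ (n + 1)) = x + sum_f_R0 (term al x) n.
Proof.
  assert (H := Sb_pos).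
  induction n.
  - change (PL al 0 a b 0 0) with (12 * a + dd al 0 a b)%nat.
    rewrite plus_INR, mult_INR, dd_eq, INR12. simpl sum_f_R0. unfold term, w, x. cbn [Nat.add pow]. field. lra.
  - change (PL al (S n) a b 0 0) with (12 * PL al n a b 0 0 + dd al (S n) a b)%nat.
    rewrite plus_INR, mult_INR, dd_eq, INR12. simpl sum_f_R0. rewrite <- Rplus_assoc, <- IHn.
    unfold term, w. fold x.
    replace (S n + 1)%nat with (S (n + 1)) by lia. rewrite pow_inv.
    replace 12 with (4 * 3) by ring. rewrite !Rpow_mult_distr. cbn [pow].
    assert (0 < 4 ^ (n+1)) by (apply pow_lt; lra). assert (0 < 3 ^ (n+1)) by (apply pow_lt; lra).
    field. repeat split; lra.
Qed.

End Corr.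

Import ListNotations.
Open Scope R_scope.

Definition bn (b : bool) : nat := if b then 1%nat else 0%nat.
Fixpoint jX (X : nat -> bool) (k : nat) : nat :=
  match k with O => O | S k => (2 * jX X k + bn (X k))%nat end.
Fixpoint tX (X : nat -> bool) (k : nat) : nat :=
  match k with O => O | S k => (3 * tX X k + bn (X k))%nat end.

Lemma bn_le b : (bn b <= 1)%nat. Proof. destruct b; simpl; lia. Qed.

Lemma jX_lt X k : (jX X k < 2 ^ k)%nat.
Proof. induction k; simpl. lia. generalize (bn_le (X k)). lia. Qed.

Lemma div2_jX X k : Nat.div2 (jX X (S k)) = jX X k /\ oddn (jX X (S k)) = bn (X k).
Proof.
  cbn [jX]. unfold oddn. destruct (X k); cbn [bn].
  - rewrite Nat.add_1_r, Nat.div2_succ_double. split; auto.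
    rewrite Nat.odd_succ, Nat.even_even. reflexivity.
  - rewrite Nat.add_0_r, Nat.div2_double. split; auto.
    replace (Nat.odd (2 * jX X k)) with false; auto.
    symmetry. rewrite <- Nat.negb_even, Nat.even_even. reflexivity.
Qed.

Lemma tern_jX al X k : ternL al k (jX X k) 0 0 0 = tX X k.
Proof.
  induction k. reflexivity.
  rewrite tern_S. destruct (div2_jX X k) as [H1 H2]. rewrite H1, H2, IHk. reflexivity.
Qed.

Lemma strcode_app s b : strcode (s ++ [b]) = (2 * strcode s + bn b)%nat.
Proof. unfold strcode. rewrite fold_left_app. simpl. destruct b; reflexivity. Qed.

Lemma strcode_jX X k : strcode (map X (seq 0 k)) = (2 ^ k + jX X k)%nat.
Proof.
  induction k. reflexivity.
  rewrite seq_S, map_app; cbn [map]; rewrite strcode_app, IHk. simpl. lia.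
Qed.

Lemma lj_jX al X k : lj al (jX X k) k = (3 ^ k + 2 * tX X k)%nat.
Proof. unfold lj. rewrite tern_jX. reflexivity. Qed.

Definition In_I al j k x := Lr al j k <= x <= Rr al j k.

Definition cterm (X : nat -> bool) (n : nat) := 2 * (if X n then 1 else 0) / 3 ^ (n + 2).

Lemma INR3' : INR 3 = 3. Proof. simpl; ring. Qed.

Lemma Lr_S al X k : Lr al (jX X (S k)) (S k) = Lr al (jX X k) k + cterm X k.
Proof.
  unfold Lr, cterm. rewrite !lj_jX. cbn [tX].
  replace (S k + 1)%nat with (S (k + 1)) by lia. replace (k + 2)%nat with (S (k + 1)) by lia.
  assert (0 < 3 ^ k) by (apply pow_lt; lra).
  destruct (X k); cbn [bn];
  repeat rewrite ?plus_INR, ?mult_INR, ?pow_INR; rewrite ?INR3'; replace (INR 2) with 2 by (simpl; ring);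
  rewrite !pow_add; cbn [pow INR]; rewrite ?pow_add; simpl; field; lra.
Qed.

Lemma psum_eq al X N : sum_f_R0 (cterm X) N = Lr al (jX X (S N)) (S N) - 1/3.
Proof.
  induction N.
  - simpl sum_f_R0. rewrite Lr_S. unfold Lr. simpl. field.
  - simpl sum_f_R0. rewrite IHN, (Lr_S al X (S N)). ring.
Qed.

Lemma Rr_Lr al j k : Rr al j k = Lr al j k + / 3 ^ (k + 1).
Proof. unfold Rr, Lr. field. apply pow_nonzero. lra. Qed.

Lemma nest_X al X k m : (k <= m)%nat ->
  Lr al (jX X k) k <= Lr al (jX X m) m /\ Rr al (jX X m) m <= Rr al (jX X k) k.
Proof.
  induction 1. lra.
  rewrite !Rr_Lr in *. rewrite Lr_S. unfold cterm.
  replace (S m + 1)%nat with (S (m + 1)) by lia. replace (m + 2)%nat with (S (m + 1)) by lia.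
  simpl pow. assert (0 < 3 ^ (m + 1)) by (apply pow_lt; lra).
  assert (0 <= / 3 ^ (m+1)) by (left; apply Rinv_0_lt_compat; auto).
  destruct (X m); split;
  (apply Rle_trans with (2 := proj2 IHle) || apply Rle_trans with (1 := proj1 IHle));
  unfold Rdiv; rewrite ?Rinv_mult; try lra.
Qed.

Lemma cv_bounds u l A B k : Un_cv u l -> (forall N, (N >= k)%nat -> A <= u N <= B) -> A <= l <= B.
Proof.
  intros Hc Hb. split.
  - destruct (Rle_lt_dec A l) as [|Hl]; auto.
    destruct (Hc (A - l)) as [N HN]. lra.
    specialize (HN (max N k) ltac:(lia)). specialize (Hb (max N k) ltac:(lia)).
    unfold R_dist, Rabs in HN. destruct Rcase_abs; lra.
  - destruct (Rle_lt_dec l B) as [|Hl]; auto.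
    destruct (Hc (l - B)) as [N HN]. lra.
    specialize (HN (max N k) ltac:(lia)). specialize (Hb (max N k) ltac:(lia)).
    unfold R_dist, Rabs in HN. destruct Rcase_abs; lra.
Qed.

Lemma cmap_In al X x k : is_cmap X x -> In_I al (jX X k) k x.
Proof.
  intro H. unfold is_cmap in H.
  assert (Lr al (jX X k) k - 1/3 <= x - 1/3 <= Rr al (jX X k) k - 1/3).
  { apply (cv_bounds _ _ _ _ k H). intros N HN. fold (cterm X).
    rewrite (psum_eq al). destruct (nest_X al X k (S N)) as [H1 H2]. lia.
    split. lra. assert (H3 := Rr_Lr al (jX X (S N)) (S N)).
    assert (0 < / 3 ^ (S N + 1)) by (apply Rinv_0_lt_compat, pow_lt; lra). lra. }
  unfold In_I. lra.
Qed.

Lemma oddn_le j : (oddn j <= 1)%nat. Proof. unfold oddn; destruct Nat.odd; lia. Qed.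

Lemma tern_inj al k : forall j j', (j < 2 ^ k)%nat -> (j' < 2 ^ k)%nat ->
  ternL al k j 0 0 0 = ternL al k j' 0 0 0 -> j = j'.
Proof.
  induction k; intros j j' H1 H2 E.
  - simpl in *. lia.
  - rewrite !tern_S in E. assert (H3 := oddn_le j). assert (H4 := oddn_le j').
    assert (ternL al k (Nat.div2 j) 0 0 0 = ternL al k (Nat.div2 j') 0 0 0 /\ oddn j = oddn j') as [E1 E2] by lia.
    assert (Nat.div2 j = Nat.div2 j').
    { apply IHk; auto; rewrite Nat.div2_div; apply Nat.Div0.div_lt_upper_bound; simpl in *; lia. }
    rewrite (Nat.div2_odd j), (Nat.div2_odd j'). unfold oddn in E2.
    rewrite H. destruct (Nat.odd j), (Nat.odd j'); simpl in *; lia.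
Qed.

Lemma In_unique al k j j' x : (j < 2 ^ k)%nat -> (j' < 2 ^ k)%nat ->
  In_I al j k x -> In_I al j' k x -> j = j'.
Proof.
  intros H1 H2 [A1 A2] [B1 B2]. apply (tern_inj al k); auto.
  unfold Lr, Rr in *. assert (Hp : 0 < 3 ^ (k + 1)) by (apply pow_lt; lra).
  assert (C1 : INR (lj al j k) <= INR (lj al j' k + 1)).
  { rewrite plus_INR. simpl (INR 1). apply Rmult_le_reg_r with (/ 3 ^ (k + 1)).
    apply Rinv_0_lt_compat; auto. unfold Rdiv in *. lra. }
  assert (C2 : INR (lj al j' k) <= INR (lj al j k + 1)).
  { rewrite plus_INR. simpl (INR 1). apply Rmult_le_reg_r with (/ 3 ^ (k + 1)).
    apply Rinv_0_lt_compat; auto. unfold Rdiv in *. lra. }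
  apply INR_le in C1. apply INR_le in C2. unfold lj in *. lia.
Qed.

Lemma lj_S al j k : lj al j (S k) = (3 * lj al (Nat.div2 j) k + 2 * oddn j)%nat.
Proof. unfold lj. rewrite tern_S. simpl. lia. Qed.

Lemma In_nest al j k x : In_I al j (S k) x -> In_I al (Nat.div2 j) k x.
Proof.
  unfold In_I, Lr, Rr. rewrite lj_S. intros [H1 H2].
  assert (Ho := oddn_le j). apply le_INR in Ho. change (INR 1) with 1 in Ho.
  rewrite plus_INR, !mult_INR in *. replace (INR 3) with 3 in * by (simpl; ring).
  replace (INR 2) with 2 in * by (simpl; ring).
  replace (S k + 1)%nat with (S (k + 1)) in * by lia. cbn [pow] in *.
  assert (Hp : 0 < 3 ^ (k + 1)) by (apply pow_lt; lra).
  assert (Ho' : 0 <= INR (oddn j)) by apply pos_INR.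
  set (l := INR (lj al (Nat.div2 j) k)) in *. set (o := INR (oddn j)) in *.
  set (c := 3 ^ (k + 1)) in *.
  split.
  - apply Rle_trans with (2 := H1). unfold Rdiv. rewrite Rinv_mult.
    assert (0 < / c) by (apply Rinv_0_lt_compat; auto).
    assert (0 <= l) by apply pos_INR. nra.
  - apply Rle_trans with (1 := H2). unfold Rdiv. rewrite Rinv_mult.
    assert (0 < / c) by (apply Rinv_0_lt_compat; auto). nra.
Qed.

Lemma build al x : (forall k, exists j, (j < 2 ^ k)%nat /\ In_I al j k x) ->
  exists X, is_cmap X x.
Proof.
  intro H.
  set (J := fun k => proj1_sig (constructive_indefinite_description _ (H k))).
  assert (HJ : forall k, (J k < 2 ^ k)%nat /\ In_I al (J k) k x).
  { intro k. unfold J. destruct constructive_indefinite_description. simpl. auto. }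
  assert (HD : forall k, Nat.div2 (J (S k)) = J k).
  { intro k. destruct (HJ k) as [A1 A2]. destruct (HJ (S k)) as [B1 B2].
    apply (In_unique al k _ _ x); auto.
    rewrite Nat.div2_div; apply Nat.Div0.div_lt_upper_bound; simpl in *; lia.
    apply In_nest; auto. }
  exists (fun k => Nat.odd (J (S k))).
  set (X := fun k => Nat.odd (J (S k))).
  assert (HX : forall k, jX X k = J k).
  { induction k. simpl. destruct (HJ 0%nat) as [A _]. simpl in A. lia.
    simpl. rewrite IHk, <- HD. unfold X. generalize (Nat.div2_odd (J (S k))).
    destruct (Nat.odd (J (S k))); simpl; lia. }
  unfold is_cmap. fold (cterm X).
  intros eps Heps.
  destruct (pow_lt_1_zero (/3) ltac:(rewrite Rabs_right; lra) eps Heps) as [N HN].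
  exists N. intros n Hn. unfold R_dist. rewrite (psum_eq al).
  destruct (HJ (S n)) as [_ [C1 C2]]. rewrite <- HX in C1, C2.
  rewrite Rr_Lr in C2.
  specialize (HN n Hn). rewrite Rabs_right in HN by (apply Rle_ge, pow_le; lra).
  assert (/ 3 ^ (S n + 1) <= (/3) ^ n).
  { rewrite <- pow_inv. replace (S n + 1)%nat with (n + 2)%nat by lia. rewrite pow_add.
    assert (0 < (/3)^n) by (apply pow_lt; lra). simpl. nra. }
  unfold Rabs. destruct Rcase_abs; lra.
Qed.

Import ListNotations.
Import ListNotations.
Open Scope R_scope.

Lemma zdec_double m : zdec (2 * m) = Z.of_nat m.
Proof. unfold zdec. rewrite Nat.even_even, Nat.div2_double. reflexivity. Qed.

Lemma code_ok al : is_code (Hfun al) (fT al).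
Proof.
  split.
  - intros a b n Hab.
    unfold code_approx. destruct (Hfun_approx al a b n) as [E1 E2]. rewrite E1, E2.
    rewrite zdec_double, <- INR_IZR_INZ.
    assert (Hp : (0 < 12 ^ (n + 1))%nat) by (apply Nat.neq_0_lt_0, Nat.pow_nonzero; lia).
    replace (S ((b + 1) * 12 ^ (n + 1) - 1)) with ((b + 1) * 12 ^ (n + 1))%nat by nia.
    rewrite mult_INR, pow_INR, INR12. replace (INR (b + 1)) with (INR (S b)) by (f_equal; lia).
    rewrite (PL_eq al a b Hab n). apply f_tail. apply x_in01; auto.
  - intros m x y Hx Hy Hxy. unfold code_modulus in Hxy. rewrite Hfun_mod in Hxy.
    eapply Rle_lt_trans. apply f_lip.
    rewrite pow_add in Hxy. assert (0 < (/2)^m) by (apply pow_lt; lra). simpl in Hxy. nra.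
Qed.

Lemma live_T (T : list bool -> Prop) alpha s : tree_code T alpha ->
  alpha (strcode s) <> 0%nat -> T s.
Proof.
  intros [_ HT] H. destruct (classic (T s)); auto. exfalso. apply H, (HT s); auto.
Qed.

Theorem lemma3p2 :
  exists Phi : prog,
    forall (T : list bool -> Prop) (alpha : nat -> nat),
      is_tree T -> tree_code T alpha -> computable alpha ->
      exists (h : nat -> nat) (f : R -> R),
        (forall n, eval alpha Phi [n] (h n)) /\
        is_code h f /\
        (forall x, in01 x -> in01 (f x)) /\
        (* (1) continuous, (strictly) increasing, f x >= x *)
        (forall x, in01 x -> forall eps, 0 < eps -> exists delta, 0 < delta /\
           forall y, in01 y -> Rabs (y - x) < delta -> Rabs (f y - f x) < eps) /\
        (forall x y, in01 x -> in01 y -> x < y -> f x < f y) /\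
        (forall x, in01 x -> x <= f x) /\
        (* (2) fixed points *)
        (forall x, in01 x ->
           (f x = x <->
            (x = 0 \/ x = 1 \/
             (in_C x /\ forall X, is_cmap X x -> in_body T X)))).
Proof.
  destruct Hfun_cp as [Phi HPhi]. exists Phi.
  intros T alpha _ Hcode _.
  exists (Hfun alpha), (fT alpha).
  split; [auto|]. split; [apply code_ok|]. split; [apply f_in01|].
  split.
  { intros x _ eps Heps. exists (eps / 2). split. lra.
    intros y _ Hy. eapply Rle_lt_trans. apply f_lip. lra. }
  split; [intros; apply f_incr; auto|]. split; [intros; apply f_ge|].
  intros x Hx.
  assert (Hfx : fT alpha x = x <-> forall k, dk alpha k x = 0).
  { rewrite <- g_zero. unfold fT. split; intro; lra. }
  rewrite Hfx. split.
  - intros Hd.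
    destruct (Req_dec x 0) as [|H0]; auto. destruct (Req_dec x 1) as [|H1]; auto.
    right; right.
    assert (Hl : forall k, exists j, (j < 2 ^ k)%nat /\ alpha (2 ^ k + j)%nat <> 0%nat /\ In_I alpha j k x).
    { intro k. destruct (proj1 (dk_zero alpha k x) (Hd k)) as [|[|[j Hj]]]; try tauto.
      exists j; exact Hj. }
    split.
    + apply (build alpha). intro k. destruct (Hl k) as [j [A [_ C]]]. eauto.
    + intros X HX n. apply (live_T T alpha); auto.
      rewrite strcode_jX. destruct (Hl n) as [j [A [B C]]].
      assert (j = jX X n). { apply (In_unique alpha n j _ x); auto. apply jX_lt. apply cmap_In; auto. }
      subst; auto.
  - intros H k. apply dk_zero.
    destruct H as [H|[H|[[X HX] Hb]]]; auto. right; right.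
    exists (jX X k). split. apply jX_lt. split.
    + rewrite <- strcode_jX. destruct Hcode as [_ HT]. rewrite (proj1 (HT _)). lia.
      apply Hb; auto.
    + apply cmap_In; auto.
Qed.
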